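(* For every odd integer $k\ge 5$, the graph $F_2(k)$ is word-representable.
   Context: For odd $k\ge5$, $F_2(k)$ is the split graph with clique $C=\{c_1,\dots,c_k\}$ and independent set $I=\{b,a_1,\dots,a_{k-1}\}$, where $N(b)=\{c_2,\dots,c_{k-1}\}$ and $N(a_i)=\{c_i,c_{i+1}\}$ for $1\le i\le k-1$. A graph $G=(V,E)$ is word-representable if there is a word $w$ over $V$ such that for all distinct $a,b\in V$, $ab\in E$ iff $a$ and $b$ alternate in $w$ (i.e. the subsequence of $w$ formed by all occurrences of $a$ and $b$ is $abab\cdots$ or $baba\cdots$). *)

(* Defs.v *)
From mathcomp Require Import all_boot.
Set Implicit Arguments. Unset Strict Implicit. Unset Printing Implicit Defensive.

(* Vertex type of F_2(k):
   inl i        = c_{i+1}   (i : 'I_k, so c_1..c_k)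
   inr None     = b
   inr (Some i) = a_{i+1}   (i : 'I_(k.-1), so a_1..a_{k-1}) *)
Definition F2V (k : nat) : finType := ('I_k + option 'I_(k.-1))%type.

Definition F2adj (k : nat) (x y : F2V k) : bool :=
  match x, y with
  | inl i, inl j => i != j :> nat
  | inl i, inr None | inr None, inl i => (1 <= i) && (i <= k - 2)  (* N(b) = {c_2..c_{k-1}} *)
  | inl j, inr (Some i) | inr (Some i), inl j =>
      (j == i :> nat) || (j == i.+1 :> nat)                    (* N(a_i) = {c_i, c_{i+1}} *)
  | inr _, inr _ => false
  end.

Definition alternate (T : eqType) (w : seq T) (x y : T) : Prop :=
  let s := [seq z <- w | (z == x) || (z == y)] in
  forall i, i.+1 < size s -> nth x s i != nth x s i.+1.

Definition word_representable (V : finType) (adj : V -> V -> bool) : Prop :=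
  exists w : seq V, (forall v : V, v \in w) /\
    forall a b : V, a != b -> (adj a b <-> alternate w a b).

(* Main.v *)
Require Import Defs.
From mathcomp Require Import all_boot zify.
Set Implicit Arguments. Unset Strict Implicit. Unset Printing Implicit Defensive.

Definition spk (S : seq (nat * seq nat)) (j : nat) : seq nat :=
  flatten [seq p.2 | p <- S & p.1 == j].

Lemma spk_nil S j : all (fun p => p.1 != j) S -> spk S j = [::].
Proof. by rewrite /spk; elim: S => //= [[a s] S IH] /= /andP [/negbTE -> /IH]. Qed.

Lemma flat_nil (q : nat -> seq nat) m n :
  (forall j, m <= j < m + n -> q j = [::]) -> flatten (map q (iota m n)) = [::].
Proof.
elim: n m => [//|n IH] m h /=. rewrite h; last lia. rewrite IH // => j hj; apply: h; lia.
Qed.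

Lemma flat_split (q : nat -> seq nat) m n a : m <= a < m + n ->
  flatten (map q (iota m n)) =
  flatten (map q (iota m (a - m))) ++ q a ++ flatten (map q (iota a.+1 (m + n - a.+1))).
Proof.
move=> h. have -> : n = (a - m) + (1 + (m + n - a.+1)) by lia.
rewrite iotaD map_cat flatten_cat iotaD map_cat flatten_cat /=.
have -> : m + (a - m) = a by lia. rewrite cats0. congr (_ ++ _ ++ flatten (map q (iota _ _))); lia.
Qed.

Lemma spikes_gen (S : seq (nat * seq nat)) : forall m n (q : nat -> seq nat),
  sorted ltn (map fst S) -> all (fun p => m <= p.1 < m + n) S ->
  (forall j, m <= j < m + n -> q j = spk S j) ->
  flatten (map q (iota m n)) = flatten (map snd S).
Proof.
elim: S => [|[a s] S IH] m n q srt rng hq.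
  by rewrite flat_nil // => j hj; rewrite hq.
move/andP: rng => [/= ra rS] /=.
have allS : all (fun p => a < p.1) S.
  have := order_path_min ltn_trans srt.
  by rewrite all_map.
rewrite (flat_split q ra) flat_nil; last first.
  move=> j hj; rewrite hq; last lia. apply: spk_nil => /=.
  rewrite /=. have -> : (a != j) = true by apply/eqP; lia.
  by apply/allP => p pS; have := allP allS p pS; move=> /= h; apply/eqP; lia.
rewrite hq /=; last lia. rewrite /spk /= eqxx /= -/(spk S a) spk_nil ?cats0; last first.
  by apply/allP => p pS; have := allP allS p pS; move=> /= h; apply/eqP; lia.
congr (_ ++ _). apply: IH.
- by move: srt => /= /path_sorted.
- apply/allP => p pS; have := allP allS p pS; have := allP rS p pS; move=> /= h1 h2; lia.
- move=> j hj; rewrite hq; last lia. rewrite /spk /=.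
  by have -> : (a == j) = false by apply/eqP; lia.
Qed.

Lemma spikes n (S : seq (nat * seq nat)) (q : nat -> seq nat) :
  sorted ltn (map fst S) -> all (fun p => p.1 < n) S ->
  (forall j, j < n -> q j = spk S j) ->
  flatten (map q (iota 0 n)) = flatten (map snd S).
Proof. move=> h1 h2 h3; apply: spikes_gen => //. Qed.

Notation cC j := (2 * j + 1).
Notation cA i := (2 * i + 2).

Definition B0 k := flatten [seq cC j :: (if 0 < j then [:: cA (j - 1)] else [::]) ++
   (if j == k - 2 then [:: 0] else [::]) | j <- iota 0 k].
Definition B1 k := flatten [seq [:: cC j] | j <- iota 0 k].
Definition Mid k := flatten [seq (if t == 0 then [:: cA (k - 2)] else if t == 1 then [:: 0]
   else [:: cA (k - 1 - t)]) | t <- iota 0 k].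
Definition B3 k := flatten [seq (if j == 1 then [:: 0] else [::]) ++
   (if j <= k - 2 then [:: cA j] else [::]) ++ [:: cC j] | j <- iota 0 k].
Definition wc k := B0 k ++ B1 k ++ Mid k ++ B1 k ++ B3 k.

Definition altc (s : seq nat) (x y : nat) : Prop :=
  let f := [seq z <- s | (z == x) || (z == y)] in
  forall i, i.+1 < size f -> nth 0 f i != nth 0 f i.+1.

Ltac noif a := lazymatch a with context[if _ then _ else _] => fail | _ => idtac end.
Ltac deq a b := noif a; noif b; first [ have -> : (a == b) = true by apply/eqP; lia
           | have -> : (a == b) = false by apply/eqP; lia
           | case: (@eqP _ a b) => ? ].
Ltac dle a b := noif a; noif b; first [ have -> : (a <= b) = true by apply/idP; lia
           | have -> : (a <= b) = false by apply/negbTE; lia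
           | case: (leqP a b) => ? ].
Ltac dec1 := match goal with
 | |- context [if ?a == ?b then _ else _] => deq a b
 | |- context [if (?a <= ?b)%N then _ else _] => dle a b
 | |- context [?a == ?b] => deq a b
 | |- context [(?a <= ?b)%N] => dle a b
 end.
Ltac dec := rewrite ?/spk; repeat (simpl; dec1); simpl; try done; try (apply/eqP; rewrite /= ?eqseq_cons; repeat (simpl; dec1); done); try (exfalso; lia).

Lemma fblk P (F : nat -> seq nat) n :
  [seq z <- flatten (map F (iota 0 n)) | P z] = flatten (map (fun j => [seq z <- F j | P z]) (iota 0 n)).
Proof. by rewrite filter_flatten -map_comp. Qed.

Ltac sp S := rewrite (@spikes _ (S : seq (nat * seq nat))); [ | by dec | by dec | by move=> ? ?; dec].

Ltac alt_ok := move=> [|[|[|[|[|[|[|[|?]]]]]]]] //= _; apply/eqP; lia.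
Ltac alt_no n := move=> /(_ n isT) /=; rewrite ?eqxx //.
Ltac unf := rewrite /altc /wc /B0 /B1 /Mid /B3 !filter_cat !fblk.
Lemma w_cc k j l : 5 <= k -> j < l -> l < k -> altc (wc k) (cC j) (cC l).
Proof.
move=> *. unf.
sp [:: (j, [:: cC j]); (l, [:: cC l])].
sp [:: (j, [:: cC j]); (l, [:: cC l])].
sp (@nil (nat * seq nat)).
sp [:: (j, [:: cC j]); (l, [:: cC l])].
rewrite /=. alt_ok.
Qed.

Lemma w_cA_lt k i j : 5 <= k -> j < i -> i <= k - 2 -> ~ altc (wc k) (cC j) (cA i).
Proof.
move=> *. unf.
sp [:: (j, [:: cC j]); (i + 1, [:: cA i])].
sp [:: (j, [:: cC j])].
sp [:: (if i == k - 2 then 0 else k - 1 - i, [:: cA i])].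
sp [:: (j, [:: cC j]); (i, [:: cA i])].
rewrite /=. alt_no 4.
Qed.

Lemma w_cA_eq k i : 5 <= k -> i <= k - 2 -> altc (wc k) (cC i) (cA i).
Proof.
move=> *. unf.
sp [:: (i, [:: cC i]); (i + 1, [:: cA i])].
sp [:: (i, [:: cC i])].
sp [:: (if i == k - 2 then 0 else k - 1 - i, [:: cA i])].
sp [:: (i, [:: cA i; cC i])].
rewrite /=. alt_ok.
Qed.

Lemma w_cA_eq1 k i : 5 <= k -> i <= k - 2 -> altc (wc k) (cC (i + 1)) (cA i).
Proof.
move=> *. unf.
sp [:: (i + 1, [:: cC (i + 1); cA i])].
sp [:: (i + 1, [:: cC (i + 1)])].
sp [:: (if i == k - 2 then 0 else k - 1 - i, [:: cA i])].
sp [:: (i, [:: cA i]); (i + 1, [:: cC (i + 1)])].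
rewrite /=. alt_ok.
Qed.

Lemma w_cA_gt k i j : 5 <= k -> i + 1 < j -> j < k -> ~ altc (wc k) (cC j) (cA i).
Proof.
move=> *. unf.
sp [:: (i + 1, [:: cA i]); (j, [:: cC j])].
sp [:: (j, [:: cC j])].
sp [:: (if i == k - 2 then 0 else k - 1 - i, [:: cA i])].
sp [:: (i, [:: cA i]); (j, [:: cC j])].
rewrite /=. alt_no 1.
Qed.

Lemma w_cB0 k  : 5 <= k -> True -> ~ altc (wc k) (cC 0) 0.
Proof.
move=> *. unf.
sp [:: (0, [:: cC 0]); (k - 2, [:: 0])].
sp [:: (0, [:: cC 0])].
sp [:: (1, [:: 0])].
sp [:: (0, [:: cC 0]); (1, [:: 0])].
rewrite /=. alt_no 4.
Qed.

Lemma w_cB1 k  : 5 <= k -> True -> altc (wc k) (cC 1) 0.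
Proof.
move=> *. unf.
sp [:: (1, [:: cC 1]); (k - 2, [:: 0])].
sp [:: (1, [:: cC 1])].
sp [:: (1, [:: 0])].
sp [:: (1, [:: 0; cC 1])].
rewrite /=. alt_ok.
Qed.

Lemma w_cBm k j : 5 <= k -> 2 <= j -> j <= k - 3 -> altc (wc k) (cC j) 0.
Proof.
move=> *. unf.
sp [:: (j, [:: cC j]); (k - 2, [:: 0])].
sp [:: (j, [:: cC j])].
sp [:: (1, [:: 0])].
sp [:: (1, [:: 0]); (j, [:: cC j])].
rewrite /=. alt_ok.
Qed.

Lemma w_cBk2 k  : 5 <= k -> True -> altc (wc k) (cC (k - 2)) 0.
Proof.
move=> *. unf.
sp [:: (k - 2, [:: cC (k - 2); 0])].
sp [:: (k - 2, [:: cC (k - 2)])].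
sp [:: (1, [:: 0])].
sp [:: (1, [:: 0]); (k - 2, [:: cC (k - 2)])].
rewrite /=. alt_ok.
Qed.

Lemma w_cBk1 k  : 5 <= k -> True -> ~ altc (wc k) (cC (k - 1)) 0.
Proof.
move=> *. unf.
sp [:: (k - 2, [:: 0]); (k - 1, [:: cC (k - 1)])].
sp [:: (k - 1, [:: cC (k - 1)])].
sp [:: (1, [:: 0])].
sp [:: (1, [:: 0]); (k - 1, [:: cC (k - 1)])].
rewrite /=. alt_no 1.
Qed.

Lemma w_AA k i l : 5 <= k -> i < l -> l <= k - 2 -> ~ altc (wc k) (cA i) (cA l).
Proof.
move=> *. unf.
sp [:: (i + 1, [:: cA i]); (l + 1, [:: cA l])].
sp (@nil (nat * seq nat)).
sp [:: (if l == k - 2 then 0 else k - 1 - l, [:: cA l]); (k - 1 - i, [:: cA i])].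
sp [:: (i, [:: cA i]); (l, [:: cA l])].
rewrite /=. alt_no 1.
Qed.

Lemma w_AB0 k  : 5 <= k -> True -> ~ altc (wc k) (cA 0) 0.
Proof.
move=> *. unf.
sp [:: (1, [:: cA 0]); (k - 2, [:: 0])].
sp (@nil (nat * seq nat)).
sp [:: (1, [:: 0]); (k - 1, [:: cA 0])].
sp [:: (0, [:: cA 0]); (1, [:: 0])].
rewrite /=. alt_no 1.
Qed.

Lemma w_AB1 k  : 5 <= k -> True -> ~ altc (wc k) (cA 1) 0.
Proof.
move=> *. unf.
sp [:: (2, [:: cA 1]); (k - 2, [:: 0])].
sp (@nil (nat * seq nat)).
sp [:: (1, [:: 0]); (k - 2, [:: cA 1])].
sp [:: (1, [:: 0; cA 1])].
rewrite /=. alt_no 1.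
Qed.

Lemma w_ABm k i : 5 <= k -> 2 <= i -> i <= k - 4 -> ~ altc (wc k) (cA i) 0.
Proof.
move=> *. unf.
sp [:: (i + 1, [:: cA i]); (k - 2, [:: 0])].
sp (@nil (nat * seq nat)).
sp [:: (1, [:: 0]); (k - 1 - i, [:: cA i])].
sp [:: (1, [:: 0]); (i, [:: cA i])].
rewrite /=. alt_no 1.
Qed.

Lemma w_ABk3 k  : 5 <= k -> True -> ~ altc (wc k) (cA (k - 3)) 0.
Proof.
move=> *. unf.
sp [:: (k - 2, [:: cA (k - 3); 0])].
sp (@nil (nat * seq nat)).
sp [:: (1, [:: 0]); (2, [:: cA (k - 3)])].
sp [:: (1, [:: 0]); (k - 3, [:: cA (k - 3)])].
rewrite /=. alt_no 1.
Qed.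

Lemma w_ABk2 k  : 5 <= k -> True -> ~ altc (wc k) (cA (k - 2)) 0.
Proof.
move=> *. unf.
sp [:: (k - 2, [:: 0]); (k - 1, [:: cA (k - 2)])].
sp (@nil (nat * seq nat)).
sp [:: (0, [:: cA (k - 2)]); (1, [:: 0])].
sp [:: (1, [:: 0]); (k - 2, [:: cA (k - 2)])].
rewrite /=. alt_no 1.
Qed.


Lemma altc_sym s x y : altc s x y -> altc s y x.
Proof.
rewrite /altc (@eq_filter _ (fun z => (z == x) || (z == y)) (fun z => (z == y) || (z == x))) //.
by move=> z; rewrite orbC.
Qed.

Lemma pair_cc k j l : 5 <= k -> j < k -> l < k -> j != l -> altc (wc k) (cC j) (cC l).
Proof.
move=> h hj hl /negP jl. have [c|c|c] := ltngtP j l.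
- exact: w_cc.
- apply: altc_sym; exact: w_cc.
- by subst; rewrite eqxx in jl.
Qed.

Lemma pair_cA k i j : 5 <= k -> i <= k - 2 -> j < k ->
  ((j == i) || (j == i.+1)) <-> altc (wc k) (cC j) (cA i).
Proof.
move=> h hi hj.
case: (eqVneq j i) => [->|ji]; first by rewrite ?eqxx; split=> // _; exact: w_cA_eq.
case: (eqVneq j i.+1) => [->|ji1].
  rewrite ?eqxx ?orbT; split=> // _.
  by rewrite (_ : i.+1 = i + 1); [exact: w_cA_eq1|lia].
rewrite ?(negbTE ji) ?(negbTE ji1) /=; split=> // H.
exfalso; case: (ltngtP j i) => c; [exact: (w_cA_lt h c hi H)| |by move: ji; rewrite c eqxx].
apply: (w_cA_gt (i := i) (j := j) h _ hj H); lia.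
Qed.

Lemma pair_cB k j : 5 <= k -> j < k ->
  ((1 <= j) && (j <= k - 2)) <-> altc (wc k) (cC j) 0.
Proof.
move=> h hj.
case: (eqVneq j 0) => [->|j0].
  by split=> // H; case: (w_cB0 h I H).
case: (eqVneq j 1) => [->|j1].
  have -> : (1 <= 1) && (1 <= k - 2) by apply/andP; split; lia.
  split=> // _; exact: (w_cB1 h I).
case: (eqVneq j (k - 1)) => [->|jk1].
  have -> : (1 <= k - 1) && (k - 1 <= k - 2) = false by apply/negbTE; lia.
  by split=> // H; case: (w_cBk1 h I H).
have -> : (1 <= j) && (j <= k - 2) by apply/andP; split; lia.
split=> // _.
case: (eqVneq j (k - 2)) => [->|jk2]; first exact: (w_cBk2 h I).
apply: w_cBm => //; lia.
Qed.

Lemma pair_AB k i : 5 <= k -> i <= k - 2 -> ~ altc (wc k) (cA i) 0.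
Proof.
move=> h hi.
case: (eqVneq i 0) => [->|i0]; first exact: (w_AB0 h I).
case: (eqVneq i 1) => [->|i1]; first exact: (w_AB1 h I).
case: (eqVneq i (k - 2)) => [->|i2]; first exact: (w_ABk2 h I).
case: (eqVneq i (k - 3)) => [->|i3]; first exact: (w_ABk3 h I).
apply: w_ABm => //; lia.
Qed.

Lemma pair_AA k i l : 5 <= k -> i <= k - 2 -> l <= k - 2 -> i != l -> ~ altc (wc k) (cA i) (cA l).
Proof.
move=> h hi hl /negP il. have [c|c|c] := ltngtP i l.
- exact: w_AA.
- move/altc_sym; exact: w_AA.
- by subst; rewrite eqxx in il.
Qed.

Lemma all_flat (P : pred nat) (F : nat -> seq nat) n :
  (forall j, j < n -> all P (F j)) -> all P (flatten (map F (iota 0 n))).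
Proof.
move=> H; apply/allP => z /flattenP [s /mapP [j hj ->] hz].
rewrite mem_iota in hj; apply: (allP (H j _)) => //; lia.
Qed.

Lemma wc_bound k : 5 <= k -> all (fun z => z < 2 * k) (wc k).
Proof.
move=> h. rewrite /wc /B0 /B1 /Mid /B3 !all_cat.
by apply/and5P; split; apply: all_flat => j hj; dec.
Qed.

Lemma in_blk (F : nat -> seq nat) k j z : j < k -> z \in F j -> z \in flatten (map F (iota 0 k)).
Proof.
move=> hj hz; apply/flattenP; exists (F j) => //; apply/mapP; exists j => //.
by rewrite mem_iota; lia.
Qed.

Lemma memC k i : i < k -> cC i \in wc k.
Proof.
move=> hi; rewrite /wc !mem_cat; apply/orP; right; apply/orP; left; rewrite /B1.
by apply: (in_blk hi); rewrite mem_seq1.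
Qed.

Lemma memA k i : i <= k - 2 -> 1 < k -> cA i \in wc k.
Proof.
move=> hi hk; rewrite /wc !mem_cat; do 4 (apply/orP; right); rewrite /B3.
have hi' : i < k by lia.
apply: (in_blk hi'). rewrite !mem_cat hi.
by rewrite mem_seq1 eqxx orbT.
Qed.

Lemma memB k : 1 < k -> 0 \in wc k.
Proof.
move=> hk; rewrite /wc !mem_cat; do 2 (apply/orP; right); apply/orP; left; rewrite /Mid.
by apply: (in_blk hk).
Qed.

Section Main.
Variable m : nat.
Local Notation k := (m.+4.+1).

Definition enc (v : F2V k) : nat :=
  match v with inl i => 2 * i + 1 | inr None => 0 | inr (Some i) => 2 * i + 2 end.

Definition dcd (z : nat) : F2V k :=
  if z == 0 then inr None else if odd z then inl (inord z./2)
  else inr (Some (inord (z./2).-1)).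

Lemma half_odd i : (2 * i + 1)./2 = i.
Proof. by rewrite (_ : 2 * i + 1 = true + i.*2) ?half_bit_double //= -muln2; lia. Qed.
Lemma half_even i : (2 * i + 2)./2 = i.+1.
Proof. by rewrite (_ : 2 * i + 2 = false + (i.+1).*2) ?half_bit_double //= -muln2; lia. Qed.

Lemma dcd_enc v : dcd (enc v) = v.
Proof.
case: v => [i|[i|]] /=; rewrite /dcd.
- rewrite (_ : (2 * i + 1 == 0) = false); last by apply/eqP; lia.
  rewrite (_ : odd (2 * i + 1) = true); last by rewrite oddD oddM.
  by rewrite half_odd inord_val.
- rewrite (_ : (2 * i + 2 == 0) = false); last by apply/eqP; lia.
  rewrite (_ : odd (2 * i + 2) = false); last by rewrite oddD oddM.
  by rewrite half_even /= inord_val.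
- by [].
Qed.

Lemma enc_dcd z : z < 2 * k -> enc (dcd z) = z.
Proof.
move=> hz; rewrite /dcd; case: (eqVneq z 0) => [->//|z0].
have ez := odd_double_half z; rewrite -muln2 in ez.
case: (odd z) ez => /= ez.
- rewrite inordK; lia.
- rewrite inordK; lia.
Qed.

Lemma hk : 5 <= k. Proof. by []. Qed.

Lemma dcd_inj a b : a < 2 * k -> b < 2 * k -> (dcd a == dcd b) = (a == b).
Proof.
move=> ha hb; apply/eqP/eqP => [e|->//].
by rewrite -(enc_dcd ha) -(enc_dcd hb) e.
Qed.

Lemma altE x y : alternate (map dcd (wc k)) x y <-> altc (wc k) (enc x) (enc y).
Proof.
rewrite /alternate /altc.
have -> : [seq z <- map dcd (wc k) | (z == x) || (z == y)] =
          map dcd [seq z <- wc k | (z == enc x) || (z == enc y)].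
  rewrite filter_map; congr map; apply: eq_in_filter => z zin.
  have zb := allP (wc_bound hk) z zin.
  rewrite /preim /=.
  have e : forall v, (dcd z == v) = (z == enc v).
    by move=> v; apply/eqP/eqP => [<-|->]; [rewrite enc_dcd | rewrite dcd_enc].
  by rewrite !e.
set f := filter _ _.
have fb : forall i, i < size f -> nth 0 f i < 2 * k.
  move=> i hi; have : nth 0 f i \in wc k by move: (mem_nth 0 hi); rewrite mem_filter => /andP [].
  by move/(allP (wc_bound hk)).
clearbody f. split => H i; rewrite /= ?size_map => hi; have h1 : i < size f := ltnW hi.
- have := H i; rewrite size_map => /(_ hi); rewrite !(nth_map 0) // dcd_inj // ?fb //.
- rewrite !(nth_map 0) // dcd_inj ?fb //; exact: H.
Qed.

Lemma enc_mem v : enc v \in wc k.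
Proof.
case: v => [i|[i|]]; rewrite [enc _]/=.
- apply: memC; exact: ltn_ord.
- apply: memA => //; have := ltn_ord i; rewrite /=; lia.
- exact: memB.
Qed.

Lemma main_m : word_representable (@F2adj k).
Proof.
exists (map dcd (wc k)); split.
  by move=> v; rewrite -(dcd_enc v); apply: map_f; apply: enc_mem.
move=> a b ab; rewrite altE.
case: a ab => [i|[i|]]; case: b => [j|[j|]] //= ab.
- split=> // _; apply: pair_cc => //.
- have hj := ltn_ord j. apply: pair_cA => //; lia.
- exact: pair_cB.
- have hi := ltn_ord i.
  have P : ((j == i :> nat) || (j == i.+1 :> nat)) <-> altc (wc k) (cC j) (cA i).
    apply: pair_cA => //; lia.
  split; [move=> /P H; exact: altc_sym | move/altc_sym/P => //].
- have hi := ltn_ord i; have hj := ltn_ord j.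
  have ij : (i : nat) != j.
    apply: contra ab => /eqP e; apply/eqP; congr (inr (Some _)); exact: val_inj e.
  split=> // H; exfalso; apply: (pair_AA (k := k) (i := i) (l := j)) => //; lia.
- have hi := ltn_ord i.
  split=> // H; exfalso; apply: (pair_AB (k := k) (i := i)) => //; lia.
- have P := pair_cB (k := k) (j := j) isT (ltn_ord j).
  split; [move=> /P H; exact: altc_sym | move/altc_sym/P => //].
- have hj := ltn_ord j.
  split=> // H; exfalso; apply: (pair_AB (k := k) (i := j) isT _ (altc_sym H)); lia.
Qed.
End Main.

Theorem lemma14 (k : nat) : 5 <= k -> odd k -> word_representable (@F2adj k).
Proof.
move=> h _. have -> : k = (k - 5).+4.+1 by lia. exact: main_m.
Qed.
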